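(* Let $E\subset U$ be a set with infinitely many points such that $\overline E\cap\partial U=\{a_1,\dots,a_m\}$ is finite ($m\ge0$) and $E$ is contained in the union of finitely many Stolz angles with vertices $a_1,\dots,a_m$ together with a compact subset of $U$. Take $q(z)=(z-a_1)(z-a_2)\cdots(z-a_m)$ (with $q\equiv1$ if $m=0$). Then there exist $\sigma>0$, $C>0$ and $N\in\mathbb{N}$ such that $M_n(E)\le Cn^{-\sigma}$ for all $n\ge N$.
   Context: $U$ is the open unit disc. A Stolz angle with vertex $a\in\partial U$ is a set of the form $\{z\in U: |z-a|\le c(1-|z|)\}$ with a constant $c>1$. For $Z_n=(z_1,\dots,z_n)$: $B(Z_n,z)=\prod_{j=1}^n\frac{z-z_j}{1-\overline{z_j}z}$, $B_q(Z_n,z)=B(Z_n,z)q(z)$ (empty product $=1$), $Z_{j-1}=(z_1,\dots,z_{j-1})$, $V(Z_n)=\prod_{j=1}^n|B_q(Z_{j-1},z_j)|$, $M(Z_n)=\sup_{z\in E}|B_q(Z_n,z)|$, $V_n(E)=\sup_{Z_n\in E^n}V(Z_n)$, $M_n(E)=\inf\{M(Z_n):Z_n\in E^n,V(Z_n)=V_n(E)\}$. *)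

(* Defs.v *)
From mathcomp Require Import all_boot all_order all_algebra.
From mathcomp Require Import all_classical all_reals all_analysis.
From mathcomp Require Import complex.
Import Order.TTheory GRing.Theory Num.Theory.
Import numFieldNormedType.Exports.

Set Implicit Arguments.
Unset Strict Implicit.
Unset Printing Implicit Defensive.

Local Open Scope ring_scope.
Local Open Scope classical_set_scope.

(* real modulus |z| of a complex number (the library norm `|z| is
   complex-valued with zero imaginary part; we take its real part) *)
Definition cabs (R : rcfType) (z : R[i]) : R := complex.Re `|z|.

Definition unit_disc (R : rcfType) : set R[i] := [set z | cabs z < 1].
Definition unit_circle (R : rcfType) : set R[i] := [set z | cabs z = 1].

(* Stolz angle with vertex a and constant c (only meaningful for c > 1) *)
Definition stolz (R : rcfType) (a : R[i]) (c : R) : set R[i] :=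
  [set z | cabs z < 1 /\ cabs (z - a) <= c * (1 - cabs z)].

Definition blaschke (R : rcfType) (Z : seq R[i]) (z : R[i]) : R[i] :=
  \prod_(w <- Z) ((z - w) / (1 - w^* * z)).

Definition qpoly (R : rcfType) (A : seq R[i]) (z : R[i]) : R[i] :=
  \prod_(a <- A) (z - a).

Definition Bq (R : rcfType) (A : seq R[i]) (Z : seq R[i]) (z : R[i]) : R[i] :=
  blaschke Z z * qpoly A z.

Definition Vpts (R : rcfType) (A : seq R[i]) (Z : seq R[i]) : R :=
  \prod_(j < size Z) cabs (Bq A (take j Z) (nth 0 Z j)).

Definition Mpts (R : realType) (A : seq R[i]) (E : set R[i]) (Z : seq R[i]) : R :=
  sup [set cabs (Bq A Z z) | z in E].

Definition tuples_in (R : rcfType) (E : set R[i]) (n : nat) : set (seq R[i]) :=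
  [set Z | size Z = n /\ forall z, z \in Z -> E z].

Definition Vn (R : realType) (A : seq R[i]) (E : set R[i]) (n : nat) : R :=
  sup [set Vpts A Z | Z in tuples_in E n].

Definition Mn (R : realType) (A : seq R[i]) (E : set R[i]) (n : nat) : R :=
  inf [set Mpts A E Z | Z in [set Z | tuples_in E n Z /\ Vpts A Z = Vn A E n]].

(* Main.v *)
Require Import Defs.
From mathcomp Require Import all_boot all_order all_algebra.
From mathcomp Require Import all_classical all_reals all_analysis.
From mathcomp Require Import complex.
From mathcomp Require Import ring lra.
Import Order.TTheory GRing.Theory Num.Theory.
Import numFieldNormedType.Exports.
Set Implicit Arguments.
Unset Strict Implicit.
Unset Printing Implicit Defensive.
Local Open Scope ring_scope.
Local Open Scope classical_set_scope.


Section Cabs.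
Variable R : rcfType.
Implicit Types x y z : R[i].

Lemma normC_cabs z : `|z| = (cabs z)%:C%C.
Proof. by rewrite /cabs normc_def. Qed.

Lemma cabs_ge0 z : 0 <= cabs z.
Proof. by have := normr_ge0 z; rewrite normC_cabs -{1}(rmorph0 (real_complex R)) lecR. Qed.

Lemma cabsM x y : cabs (x * y) = cabs x * cabs y.
Proof. by apply: complexI; rewrite rmorphM -!normC_cabs normrM. Qed.

Lemma cabsD x y : cabs (x + y) <= cabs x + cabs y.
Proof. by have := ler_normD x y; rewrite !normC_cabs -rmorphD lecR. Qed.

Lemma cabsN x : cabs (- x) = cabs x.
Proof. by apply: complexI; rewrite -!normC_cabs normrN. Qed.

Lemma cabsB x y : cabs (x - y) = cabs (y - x).
Proof. by rewrite -cabsN opprB. Qed.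



Lemma cabs0 : cabs (0 : R[i]) = 0.
Proof. by apply: complexI; rewrite -!normC_cabs normr0. Qed.

Lemma cabs1 : cabs (1 : R[i]) = 1.
Proof. by apply: complexI; rewrite -!normC_cabs normr1. Qed.

Lemma cabs_eq0 z : (cabs z == 0) = (z == 0).
Proof. by rewrite -(inj_eq (@complexI _)) -normC_cabs normr_eq0. Qed.

Lemma cabsV x : cabs (x^-1) = (cabs x)^-1.
Proof.
have [->|x0] := eqVneq x 0; first by rewrite invr0 !cabs0 invr0.
have h : cabs x * cabs x^-1 = 1 by rewrite -cabsM mulfV // cabs1.
have c0 : cabs x != 0 by rewrite cabs_eq0.
by apply: (mulfI c0); rewrite h mulfV.
Qed.

Lemma cabsJ z : cabs (z^*)%R = cabs z.
Proof. by apply: complexI; rewrite -!normC_cabs norm_conjC. Qed.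

Lemma cabs_prod (s : seq R[i]) (F : R[i] -> R[i]) :
  cabs (\prod_(w <- s) F w) = \prod_(w <- s) cabs (F w).
Proof.
elim: s => [|w s IH]; first by rewrite !big_nil cabs1.
by rewrite !big_cons cabsM IH.
Qed.

Lemma cabs_Re z : `|complex.Re z| <= cabs z.
Proof.
rewrite /cabs normc_def /= -(sqrtr_sqr (complex.Re z)); apply: ler_wsqrtr.
by rewrite lerDl sqr_ge0.
Qed.

Lemma cabs_ReIm z : cabs z <= `|complex.Re z| + `|complex.Im z|.
Proof.
rewrite /cabs normc_def /=.
have h : 0 <= `|complex.Re z| + `|complex.Im z| by rewrite addr_ge0.
rewrite -[X in _ <= X](ger0_norm h) -(sqrtr_sqr (`|complex.Re z| + `|complex.Im z|)); apply: ler_wsqrtr.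
rewrite sqrrD !real_normK ?num_real // -addrA [X in _ <= _ + X]addrC addrA lerDl mulrn_wge0 // mulr_ge0 //.
Qed.

Lemma cabsC x : ((cabs x)%:C%C : R[i]) = `|x|.
Proof. by rewrite normC_cabs. Qed.

Definition bf (w z : R[i]) : R[i] := (z - w) / (1 - w^* * z).

Lemma bf_id z w : `|1 - w^* * z| ^+ 2 - `|z - w| ^+ 2 = (1 - `|z|^+2) * (1 - `|w|^+2).
Proof. rewrite !normCK !rmorphB !rmorphM rmorph1 /= conjCK. ring. Qed.

Lemma cabs_bf_sym w z : cabs (bf w z) = cabs (bf z w).
Proof.
rewrite /bf !cabsM !cabsV cabsB; congr (_ * _^-1).
rewrite -cabsJ rmorphB rmorph1 rmorphM /= conjCK mulrC.
by [].
Qed.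

Lemma cabs_denom_ge w z : 1 - cabs w * cabs z <= cabs (1 - w^* * z).
Proof.
have := cabsD (1 - w^* * z) (w^* * z).
rewrite subrK cabs1 cabsM cabsJ; lra.
Qed.

Lemma cabs_bf_le1 w z : cabs w < 1 -> cabs z < 1 -> cabs (bf w z) <= 1.
Proof.
move=> hw hz.
have hd : 0 < cabs (1 - w^* * z).
  apply: lt_le_trans (cabs_denom_ge w z).
  have := cabs_ge0 w; have := cabs_ge0 z; nra.
rewrite /bf cabsM cabsV ler_pdivrMr // mul1r.
have e := bf_id z w.
rewrite !normC_cabs -!rmorphXn -!rmorphB -rmorphM in e.
have e' := complexI e.
have P : 0 <= (1 - cabs z ^+ 2) * (1 - cabs w ^+ 2).
  apply: mulr_ge0; rewrite subr_ge0 -[1](expr1n _ 2) ler_pXn2r ?nnegrE ?cabs_ge0 //;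
  exact: ltW.
have := cabs_ge0 (z - w).
have := cabs_ge0 (1 - w^*%R * z); nra.
Qed.

Lemma cabs_bf_le w z : cabs w < 1 -> cabs z < 1 ->
  cabs (bf w z) <= cabs (z - w) / (1 - cabs w * cabs z).
Proof.
move=> hw hz.
have hp : 0 < 1 - cabs w * cabs z.
  have := cabs_ge0 w; have := cabs_ge0 z; nra.
rewrite /bf cabsM cabsV; apply: ler_wpM2l; first exact: cabs_ge0.
rewrite lef_pV2 ?posrE ?cabs_denom_ge //.
exact: lt_le_trans (cabs_denom_ge w z).
Qed.
End Cabs.

Section Vrec.
Variable R : rcfType.
Variable A : seq R[i].

Fixpoint Vrec (Y W : seq R[i]) : R :=
  if W is x :: W' then cabs (Bq A Y x) * Vrec (rcons Y x) W' else 1.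

Lemma Vrec_ge0 Y W : 0 <= Vrec Y W.
Proof.
elim: W Y => [|x W IH] Y /=; first exact: ler01.
by rewrite mulr_ge0 ?cabs_ge0.
Qed.

Lemma Vprod_rec Y W :
  \prod_(j < size W) cabs (Bq A (Y ++ take j W) (nth 0 W j)) = Vrec Y W.
Proof.
elim: W Y => [|x W IH] Y /=; first by rewrite big_ord0.
rewrite big_ord_recl /= cats0 -IH; congr (_ * _).
by apply: eq_bigr => j _; rewrite /= cat_rcons.
Qed.

Lemma Vpts_rec Z : Vpts A Z = Vrec [::] Z.
Proof. by rewrite /Vpts -Vprod_rec. Qed.

Lemma Bq_perm Y Y' x : perm_eq Y Y' -> Bq A Y x = Bq A Y' x.
Proof. by move=> p; rewrite /Bq /blaschke (perm_big _ p). Qed.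

Lemma Vrec_perm Y Y' W : perm_eq Y Y' -> Vrec Y W = Vrec Y' W.
Proof.
elim: W Y Y' => [|x W IH] Y Y' p //=.
rewrite (Bq_perm x p) (IH _ (rcons Y' x)) //.
by rewrite -!cats1 perm_cat2r.
Qed.

Lemma Bq_rcons Y x y : Bq A (rcons Y x) y = Bq A Y y * bf x y.
Proof.
have hp : perm_eq (rcons Y x) (x :: Y) by rewrite perm_rcons.
rewrite (Bq_perm y hp) /Bq /blaschke big_cons.
rewrite /bf; ring.
Qed.

Lemma Vrec_swap Y x y W : Vrec Y [:: x, y & W] = Vrec Y [:: y, x & W].
Proof.
have hp : perm_eq (rcons (rcons Y x) y) (rcons (rcons Y y) x).
  by rewrite -!cats1 -!catA perm_cat2l perm_catC.
rewrite /= !Bq_rcons (cabsM (Bq A Y y)) (cabsM (Bq A Y x)) (cabs_bf_sym x y).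
rewrite (Vrec_perm W hp); ring.
Qed.

Lemma Vrec_last Y x W : Vrec Y (x :: W) = Vrec Y (rcons W x).
Proof.
elim: W Y => [|w W IH] Y //.
by rewrite Vrec_swap rcons_cons [Vrec Y (w :: rcons W x)]/= -IH.
Qed.

Lemma Vrec_rcons Y W x : Vrec Y (rcons W x) = Vrec Y W * cabs (Bq A (Y ++ W) x).
Proof.
elim: W Y => [|w W IH] Y /=; first by rewrite cats0 mulr1 mul1r.
by rewrite IH cat_rcons mulrA.
Qed.

Lemma Vrec_cat Y P W : Vrec Y (P ++ W) = Vrec Y P * Vrec (Y ++ P) W.
Proof.
elim: P Y => [|p P IH] Y /=; first by rewrite cats0 mul1r.
by rewrite IH cat_rcons mulrA.
Qed.

Lemma Vpts_split P x W :
  Vpts A (P ++ x :: W) = (Vrec [::] P * Vrec P W) * cabs (Bq A (P ++ W) x).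
Proof.
by rewrite !Vpts_rec Vrec_cat Vrec_last Vrec_rcons /= mulrA.
Qed.

End Vrec.

Section Bounds.
Variable R : rcfType.
Implicit Types (z w : R[i]) (Y : seq R[i]).

Definition Pq (A : seq R[i]) : R := \prod_(a <- A) (1 + cabs a).

Lemma Pq_ge1 A : 1 <= Pq A.
Proof.
rewrite /Pq; elim: A => [|a A IH]; first by rewrite big_nil.
rewrite big_cons; apply: mulr_ege1 => //.
by rewrite lerDl cabs_ge0.
Qed.

Lemma qpoly_le A z : cabs z < 1 -> cabs (Defs.qpoly A z) <= Pq A.
Proof.
move=> hz; rewrite /Defs.qpoly cabs_prod /Pq.
apply: ler_prod => a _; rewrite cabs_ge0 /=.
apply: le_trans (cabsD _ _) _; rewrite cabsN lerD2r; exact: ltW.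
Qed.

Lemma qpoly_le_a A a z : a \in A -> cabs z < 1 ->
  cabs (Defs.qpoly A z) <= cabs (z - a) * Pq A.
Proof.
move=> aA hz; rewrite /Defs.qpoly cabs_prod /Pq !(big_rem a aA) /=.
have h1 : \prod_(b <- rem a A) cabs (z - b) <= \prod_(b <- rem a A) (1 + cabs b).
  apply: ler_prod => b _; rewrite cabs_ge0 /=.
  apply: le_trans (cabsD _ _) _; rewrite cabsN lerD2r; exact: ltW.
have h2 : 0 <= \prod_(b <- rem a A) (1 + cabs b).
  by apply: prodr_ge0 => b _; rewrite addr_ge0 ?cabs_ge0.
have h3 : 1 <= 1 + cabs a by rewrite lerDl cabs_ge0.
have h4 := cabs_ge0 (z - a).
have h5 : 0 <= \prod_(b <- rem a A) cabs (z - b).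
  by apply: prodr_ge0 => b _; rewrite cabs_ge0.
set p1 := \prod_(b <- rem a A) cabs (z - b) in h1 h5 *.
set p2 := \prod_(b <- rem a A) (1 + cabs b) in h1 h2 *.
set c := cabs (z - a) in h4 *.
set d := 1 + cabs a in h3 *.
have := mulr_ge0 h4 h2; nra.
Qed.

Lemma blaschke_le (p : pred R[i]) Y z :
  cabs z < 1 -> (forall w, w \in Y -> cabs w < 1) ->
  (forall w, w \in Y -> p w -> cabs (bf w z) <= 2^-1) ->
  cabs (blaschke Y z) <= (2^-1) ^+ (count p Y).
Proof.
move=> hz; elim: Y => [|w Y IH] hY hp; first by rewrite /blaschke big_nil cabs1.
rewrite /blaschke big_cons cabsM /=.
have IH' : cabs (blaschke Y z) <= (2^-1) ^+ (count p Y).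
  apply: IH => [v vY|v vY]; [apply: hY|apply: hp]; by rewrite inE vY orbT.
have hw : cabs w < 1 by apply: hY; rewrite inE eqxx.
have hb1 := cabs_bf_le1 hw hz.
case pw: (p w) => /=.
  rewrite add1n exprS; apply: ler_pM => //; rewrite ?cabs_ge0 //.
  by apply: hp; rewrite ?inE ?eqxx.
rewrite add0n -[X in _ <= X]mul1r; apply: ler_pM => //; exact: cabs_ge0.
Qed.

Lemma Bq_le A Y z : cabs z < 1 -> (forall w, w \in Y -> cabs w < 1) ->
  cabs (Bq A Y z) <= cabs (Defs.qpoly A z).
Proof.
move=> hz hY; rewrite /Bq cabsM -[X in _ <= X]mul1r; apply: ler_wpM2r.
  exact: cabs_ge0.
have := @blaschke_le pred0 Y z hz hY; rewrite count_pred0 expr0; apply.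
by [].
Qed.

End Bounds.

Section Pigeon.

Lemma sum_count (T U : eqType) (f : T -> U) (cells : seq U) (s : seq T) :
  uniq cells -> (forall y, y \in s -> f y \in cells) ->
  \sum_(c <- cells) count (fun y => f y == c) s = size s.
Proof.
move=> uc; elim: s => [|x s IH] hs /=; first by rewrite big1.
rewrite big_split /= IH; last by move=> y ys; apply: hs; rewrite inE ys orbT.
suff -> : \sum_(i <- cells) (f x == i : nat) = 1%N by [].
rewrite (eq_bigr (fun c => if f x == c then 1%N else 0%N)); last by move=> c _; case: eqP.
rewrite -big_mkcond /=.
rewrite sum1_count (eq_count (a2 := pred1 (f x))); last by move=> c /=; rewrite eq_sym.
by rewrite count_uniq_mem // hs // inE eqxx.
Qed.

Lemma pigeon (T : eqType) (f : T -> nat * nat) (L : nat) (s : seq T) :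
  (forall y, y \in s -> ((f y).1 < L)%N /\ ((f y).2 < L)%N) -> (0 < size s)%N ->
  exists2 x, x \in s & (size s <= L * L * count (fun y => f y == f x) s)%N.
Proof.
move=> hL hs.
case: (boolP (has (fun x => size s <= L * L * count (fun y => f y == f x) s)%N s)).
  by move/hasP.
move/hasPn => hn; exfalso.
set cells := [seq (i, j) | i <- iota 0 L, j <- iota 0 L].
have uc : uniq cells by apply: allpairs_uniq => //; [exact: iota_uniq|exact: iota_uniq|move=> [? ?] [? ?]].
have mc : forall y, y \in s -> f y \in cells.
  move=> y ys; have [h1 h2] := hL y ys; case E: (f y) => [i j].
  rewrite E /= in h1 h2.
  by apply: (allpairs_f (fun i j => (i, j))); rewrite mem_iota add0n.
have e := sum_count uc mc.
have hlt : forall c, c \in cells -> (L * L * count (fun y => f y == c) s < size s)%N.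
  move=> c _; case: (boolP (has (fun y => f y == c) s)).
    move/hasP => [y ys /eqP <-]; have := hn y ys; by rewrite -ltnNge.
  by move/hasPn => h0; rewrite (eq_in_count (a2 := pred0)) ?count_pred0 ?muln0 // => y /h0 /negbTE.
have Lpos : (0 < L)%N.
  have [y ys] : exists y, y \in s.
    by move: hs; case: (s) => // y s' _; exists y; rewrite mem_head.
  by have [+ _] := hL y ys; case: (L).
have : (\sum_(c <- cells) (L * L * count (fun y => f y == c) s + 1) <= \sum_(c <- cells) size s)%N.
  rewrite big_seq_cond [X in (_ <= X)%N]big_seq_cond; apply: leq_sum => c /andP [/hlt].
  by rewrite addn1.
rewrite big_split /= -big_distrr /= e sum1_size big_const_seq count_predT iter_addn_0.
rewrite size_allpairs !size_iota.
have LLpos : (0 < L * L)%N by rewrite muln_gt0 Lpos.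
move: (L * L)%N LLpos => LL LLpos.
rewrite mulnC; move: (size s) => m.
by rewrite -[X in (_ <= X)%N]addn0 leq_add2l leqNgt LLpos.
Qed.
End Pigeon.

Section Cells.
Variable R : realType.
Implicit Types (z w : R[i]).

Definition cell (h : R) (z : R[i]) : nat * nat :=
  (Num.truncn ((complex.Re z + 1) / h), Num.truncn ((complex.Im z + 1) / h)).

Lemma Re_le1 z : cabs z < 1 -> 0 <= complex.Re z + 1 < 2.
Proof.
move=> hz; have := le_lt_trans (cabs_Re z) hz; rewrite ltr_norml => /andP[h1 h2].
by apply/andP; split; lra.
Qed.

Lemma Im_le1 z : cabs z < 1 -> 0 <= complex.Im z + 1 < 2.
Proof.
move=> hz; have h : `|complex.Im z| <= cabs z.
  rewrite /cabs normc_def /= -(sqrtr_sqr (complex.Im z)); apply: ler_wsqrtr.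
  by rewrite lerDr sqr_ge0.
have := le_lt_trans h hz; rewrite ltr_norml => /andP[h1 h2].
by apply/andP; split; lra.
Qed.

Lemma truncn_lt_bound (a h : R) : 0 < h -> 0 <= a < 2 ->
  (Num.truncn (a / h) < Num.truncn (2 / h) + 1)%N.
Proof.
move=> hp /andP[a0 a2].
have h1 : (Num.truncn (a / h))%:R <= a / h by rewrite truncn_le divr_ge0 // ltW.
have h2 : a / h < 2 / h by rewrite ltr_pM2r ?invr_gt0.
have h3 := truncnS_gt (2 / h).
rewrite -(ltr_nat R) addn1; exact: le_lt_trans h1 (lt_trans h2 h3).
Qed.

Lemma truncn_close (a b h : R) : 0 < h -> 0 <= a -> 0 <= b ->
  Num.truncn (a / h) = Num.truncn (b / h) -> `|a - b| < h.
Proof.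
move=> hp a0 b0 e.
have ia := truncn_itv (divr_ge0 a0 (ltW hp)).
have ib := truncn_itv (divr_ge0 b0 (ltW hp)).
rewrite e in ia; move: ia ib; set k := (Num.truncn (b / h)).
move=> /andP[a1 a2] /andP[b1 b2].
rewrite -natr1 in a2 b2.
have ha1 : k%:R * h <= a by rewrite -ler_pdivlMr.
have ha2 : a < (k%:R + 1) * h by rewrite -ltr_pdivrMr.
have hb1 : k%:R * h <= b by rewrite -ler_pdivlMr.
have hb2 : b < (k%:R + 1) * h by rewrite -ltr_pdivrMr.
rewrite ltr_norml; apply/andP; split; nra.
Qed.

Lemma cell_lt (h : R) z : 0 < h -> cabs z < 1 ->
  ((cell h z).1 < Num.truncn (2 / h) + 1)%N /\ ((cell h z).2 < Num.truncn (2 / h) + 1)%N.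
Proof.
move=> hp hz; split; apply: truncn_lt_bound => //; [exact: Re_le1|exact: Im_le1].
Qed.

Lemma cell_close (h : R) z w : 0 < h -> cabs z < 1 -> cabs w < 1 ->
  cell h z = cell h w -> cabs (z - w) < 2 * h.
Proof.
move=> hp hz hw [e1 e2].
have /andP[rz _] := Re_le1 hz; have /andP[rw _] := Re_le1 hw.
have /andP[iz _] := Im_le1 hz; have /andP[iw _] := Im_le1 hw.
have c1 := truncn_close hp rz rw e1.
have c2 := truncn_close hp iz iw e2.
apply: le_lt_trans (cabs_ReIm _) _.
move: c1 c2; case: z {hz rz iz e1 e2} => a b; case: w {hw rw iw} => c d /=.
have -> : a + 1 - (c + 1) = a + - c by ring.
have -> : b + 1 - (d + 1) = b + - d by ring.
move=> c1 c2; lra.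
Qed.

Lemma cell_bf (u : R) x w : 0 < u -> cabs x < 1 -> cabs w <= 1 - u ->
  cell (u / 4) x = cell (u / 4) w -> cabs (bf w x) <= 2^-1.
Proof.
move=> up hx hw e.
have hw1 : cabs w < 1 by apply: le_lt_trans hw _; lra.
have hc := cell_close (divr_gt0 up (ltr0Sn _ 3)) hx hw1 e.
apply: le_trans (cabs_bf_le hw1 hx) _.
have cw0 := cabs_ge0 w; have cx0 := cabs_ge0 x.
have hd : u <= 1 - cabs w * cabs x by nra.
rewrite ler_pdivrMr; last by lra.
nra.
Qed.

End Cells.

Section Compact.
Variable R : realType.

Lemma open_cabs_lt (r : R) : open ([set z : R[i]^o | cabs z < r]).
Proof.
rewrite openE => z /= hz.
apply/nbhs_ballP; exists ((r - cabs z)%:C%C).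
  by rewrite /= ltcE /= eqxx subr_gt0.
move=> y; rewrite -ball_normE /ball_ /= => hy.
rewrite normC_cabs ltcR in hy.
have := cabsD z (y - z); rewrite addrC subrK cabsB; lra.
Qed.

Lemma foldr_max_lt (s : seq R) : (forall r, r \in s -> r < 1) -> foldr Num.max 0 s < 1.
Proof.
elim: s => [|a s IH] h /=; first exact: ltr01.
rewrite gt_max; apply/andP; split; first by apply: h; rewrite mem_head.
by apply: IH => r rs; apply: h; rewrite inE rs orbT.
Qed.

Lemma foldr_max_ge (s : seq R) r : r \in s -> r <= foldr Num.max 0 s.
Proof.
elim: s => [|a s IH] //=; rewrite inE => /orP[/eqP ->|rs].
  by rewrite le_max lexx.
by rewrite le_max IH ?orbT.
Qed.

Lemma foldr_max_ge0 (s : seq R) : 0 <= foldr Num.max 0 s.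
Proof. elim: s => [|a s IH] //=; by rewrite le_max IH orbT. Qed.

Lemma compact_radius (K : set R[i]) : compact (K : set R[i]^o) ->
  K `<=` @unit_disc R -> exists r0 : R, [/\ 0 <= r0, r0 < 1 & forall z, K z -> cabs z <= r0].
Proof.
rewrite compact_cover => cK hK.
have := cK R [set r : R | r < 1] (fun r => [set z : R[i]^o | cabs z < r]).
case.
- by move=> r _; exact: open_cabs_lt.
- move=> z Kz; have hz : cabs z < 1 := hK z Kz.
  exists ((cabs z + 1) / 2) => /=; lra.
move=> D' sD cov.
exists (foldr Num.max 0 (finmap.enum_fset D')); split.
- exact: foldr_max_ge0.
- apply: foldr_max_lt => r rD; have := sD r rD; by rewrite inE.
- move=> z Kz; have [r rD hr] := cov z Kz.
  by apply: le_trans (ltW hr) (foldr_max_ge rD).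
Qed.
End Compact.

Section Main.
Variable R : realType.
Implicit Types (z w x : R[i]) (Y Z : seq R[i]) (A : seq R[i]).

Lemma cabs_gt0 z : (0 < cabs z) = (z != 0).
Proof. by rewrite lt_def cabs_ge0 cabs_eq0 andbT. Qed.

Lemma Bq_neq0 A Y x : (forall a, a \in A -> cabs a = 1) -> cabs x < 1 ->
  (forall w, w \in Y -> cabs w < 1) -> x \notin Y -> Bq A Y x != 0.
Proof.
move=> hA hx hY xY; rewrite /Bq mulf_neq0 //.
  rewrite /blaschke prodf_seq_neq0; apply/allP => w wY /=.
  have hw := hY w wY.
  rewrite mulf_neq0 // ?invr_neq0 //.
    by rewrite subr_eq0; apply: contraNneq xY => ->.
  rewrite -cabs_gt0; apply: lt_le_trans (cabs_denom_ge w x).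
  have := cabs_ge0 w; have := cabs_ge0 x; nra.
rewrite /Defs.qpoly prodf_seq_neq0; apply/allP => a aA /=.
rewrite subr_eq0; apply/eqP => e; move: hx; rewrite e hA //; lra.
Qed.

Lemma Vrec_pos A Y W : (forall a, a \in A -> cabs a = 1) ->
  (forall w, w \in Y ++ W -> cabs w < 1) -> uniq (Y ++ W) -> 0 < Vrec A Y W.
Proof.
move=> hA; elim: W Y => [|x W IH] Y hd hu /=; first exact: ltr01.
have hu' : uniq (rcons Y x ++ W) by rewrite cat_rcons.
have hd' : forall w, w \in rcons Y x ++ W -> cabs w < 1 by move=> w; rewrite cat_rcons; exact: hd.
rewrite mulr_gt0 ?IH // cabs_gt0 Bq_neq0 //.
- by apply: hd; rewrite mem_cat in_cons eqxx orbT.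
- by move=> w wY; apply: hd; rewrite mem_cat wY.
- by move: hu'; rewrite cat_uniq rcons_uniq => /andP[/andP[]].
Qed.

Lemma Bq_cons A x Y z : Bq A (x :: Y) z = bf x z * Bq A Y z.
Proof. by rewrite /Bq /blaschke big_cons mulrA. Qed.

Lemma Vpts_le A Z : (forall w, w \in Z -> cabs w < 1) -> Vpts A Z <= Pq A ^+ size Z.
Proof.
move=> hZ; rewrite /Vpts (_ : Pq A ^+ size Z = \prod_(j < size Z) Pq A);
  last by rewrite prodr_const card_ord.
apply: ler_prod => j _; rewrite cabs_ge0 /=.
have hj : nth 0 Z j \in Z by rewrite mem_nth.
apply: le_trans (Bq_le _ _ _) (qpoly_le _ _); try exact: hZ.
by move=> w /mem_take; exact: hZ.
Qed.

Lemma sup_ge0 (S : set R) : (forall r, S r -> 0 <= r) -> 0 <= sup S.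
Proof.
move=> h; case: (pselect (has_sup S)) => [[[r Sr] ub]|ns]; last by rewrite sup_out.
by apply: le_trans (h r Sr) _; apply: ub_le_sup.
Qed.

Lemma Mpts_ge0 A E Z : 0 <= Mpts A E Z.
Proof. by apply: sup_ge0 => r [z _ <-]; exact: cabs_ge0. Qed.

End Main.

Section Core.
Variable R : realType.
Implicit Types (z w x : R[i]) (Y Z : seq R[i]) (A : seq R[i]) (E : set R[i]).

Lemma swap_bound A E n P1 x W z :
  E `<=` @unit_disc R ->
  has_ubound [set Vpts A Z | Z in tuples_in E n] ->
  tuples_in E n (P1 ++ x :: W) -> Vpts A (P1 ++ x :: W) = Vn A E n ->
  0 < Vn A E n -> E z ->
  cabs (Bq A (P1 ++ x :: W) z) <= cabs (Bq A (P1 ++ W) x).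
Proof.
move=> hE hub [hsz hin] hV Vpos Ez.
have hZ' : tuples_in E n (P1 ++ z :: W).
  split; first by move: hsz; rewrite !size_cat.
  move=> y; rewrite mem_cat in_cons => /orP[yP|/orP[/eqP ->//|yW]]; apply: hin.
    by rewrite mem_cat yP.
  by rewrite mem_cat in_cons yW !orbT.
have hle : Vpts A (P1 ++ z :: W) <= Vn A E n.
  by apply: ub_le_sup => //; exists (P1 ++ z :: W).
rewrite -hV !Vpts_split in hle Vpos.
set R0 := Vrec A [::] P1 * Vrec A P1 W in hle Vpos.
have R0ge : 0 <= R0 by rewrite mulr_ge0 // Vrec_ge0.
have R0pos : 0 < R0.
  rewrite lt_def R0ge andbT; apply/eqP => e; move: Vpos; rewrite e mul0r ltxx.
  by [].
rewrite ler_pM2l // in hle.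
have hx : cabs x < 1 by apply: hE; apply: hin; rewrite mem_cat in_cons eqxx orbT.
have hz : cabs z < 1 := hE z Ez.
have hp : perm_eq (P1 ++ x :: W) (x :: P1 ++ W).
  by rewrite -cat1s perm_catCA.
rewrite (Bq_perm _ _ hp) Bq_cons cabsM.
apply: le_trans hle; rewrite -[X in _ <= X]mul1r; apply: ler_wpM2r.
  exact: cabs_ge0.
exact: cabs_bf_le1.
Qed.

End Core.

Section Arith.
Variable R : realType.

Lemma case2_arith (u nr Lr T a : R) : 0 < u -> u <= 1 -> nr * u ^+ 4 = 1 -> 0 < T ->
  nr <= Lr ^+ 2 * T -> 0 <= Lr -> Lr * u <= 9 -> 0 <= a -> a * T <= 2 -> a <= 162 * u.
Proof.
move=> u0 u1 hn T0 hnL L0 hL a0 haT.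
have h1 : a * nr <= 2 * Lr ^+ 2.
  apply: le_trans (_ : a * (Lr ^+ 2 * T) <= _).
    by apply: ler_wpM2l.
  by rewrite mulrCA mulrC; apply: ler_wpM2r => //; rewrite sqr_ge0.
have h2 : a <= 2 * Lr ^+ 2 * u ^+ 4.
  have -> : a = (a * nr) * u ^+ 4 by rewrite -mulrA hn mulr1.
  by apply: ler_wpM2r => //; rewrite exprn_ge0 // ltW.
have h3 : (Lr * u) ^+ 2 <= 81.
  have : 0 <= Lr * u by rewrite mulr_ge0 // ltW.
  move=> h; have -> : (81 : R) = 9 ^+ 2 by rewrite expr2; lra.
  by rewrite ler_pXn2r // ?nnegrE //; lra.
have h4 : 2 * Lr ^+ 2 * u ^+ 4 = 2 * (Lr * u) ^+ 2 * u ^+ 2.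
  by ring.
rewrite h4 in h2.
have hu2 : u ^+ 2 <= u by rewrite expr2 -[X in _ <= X]mulr1 ler_wpM2l // ltW.
have hu20 : 0 <= u ^+ 2 by rewrite sqr_ge0.
set v := (Lr * u) ^+ 2 in h2 h3.
nra.
Qed.

Lemma half_pow (t : nat) : (2^-1 : R) ^+ t * (t.+1)%:R <= 2.
Proof.
have h : (t.+1 <= 2 ^ t.+1)%N by apply: ltnW; apply: ltn_expl.
have h' : (t.+1)%:R <= (2 : R) ^+ t.+1 by rewrite -natrX ler_nat.
have e : (2^-1 : R) ^+ t * 2 ^+ t.+1 = 2.
  by rewrite exprS mulrCA -exprMn mulVf ?expr1n ?mulr1 //.
rewrite -[X in _ <= X]e; apply: ler_wpM2l => //; by rewrite exprn_ge0 // invr_ge0.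
Qed.

Lemma u_props (n : nat) (r0 : R) : 0 <= r0 -> r0 < 1 ->
  (Num.truncn (((1 - r0) ^+ 4)^-1) + 1 <= n)%N ->
  [/\ (0:R) < (n%:R : R) `^ (- 4^-1), n%:R * ((n%:R : R) `^ (- 4^-1)) ^+ 4 = 1
    & (n%:R : R) `^ (- 4^-1) <= 1 - r0].
Proof.
move=> r00 r01 hn.
have n0 : (0 < n)%N by move: hn; rewrite addn1; case: n.
have nr0 : (0 : R) < n%:R by rewrite ltr0n.
set u := n%:R `^ (- 4^-1).
have u0 : 0 < u by apply: powR_gt0.
have u4 : u ^+ 4 = n%:R^-1.
  rewrite -powR_mulrn ?ltW // /u -powRrM.
  rewrite (_ : - 4^-1 * 4%:R = -1 :> R); last by rewrite mulNr mulVf.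
  by rewrite powR_inv1 // ltW.
split => //; first by rewrite u4 mulfV // gt_eqF.
have q0 : 0 < 1 - r0 by lra.
have hq : ((1 - r0) ^+ 4)^-1 < n%:R.
  apply: lt_le_trans (truncnS_gt _) _; rewrite ler_nat -addn1; exact: hn.
have hu4 : u ^+ 4 < (1 - r0) ^+ 4.
  rewrite u4 -(invrK ((1 - r0) ^+ 4)) ltf_pV2 ?posrE //.
  by rewrite invr_gt0 exprn_gt0.
apply: ltW; move: hu4; rewrite ltr_pXn2r // ?nnegrE ltW //.
Qed.

Lemma hl_contra (a b c : R) : a <= b -> 1 - c < a -> c <= 1 - b -> False.
Proof. lra. Qed.

Lemma hl_case1 (d c0 u P x1 s2 : R) : 0 <= d -> d <= c0 * u -> 1 <= P -> 0 < u ->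
  0 < c0 -> d * P <= (c0 + 162) * P * u.
Proof. move=> *; nra. Qed.

Lemma hl_stolz (s2 c0 x u : R) : s2 <= c0 -> 1 < s2 -> 1 - u < x -> x < 1 -> 0 < u ->
  s2 * (1 - x) <= c0 * u.
Proof. move=> *; apply: ler_pM; lra. Qed.

Lemma hl_ule1 (u r : R) : u <= 1 - r -> 0 <= r -> u <= 1.
Proof. lra. Qed.

Lemma hl_e8 (u : R) : 0 < u -> 2 / (u / 4) * u = 8.
Proof. move=> h; field; rewrite gt_eqF //. Qed.

Lemma hl_L (T u : R) : T * u <= 8 -> u <= 1 -> (T + 1) * u <= 9.
Proof. move=> *; nra. Qed.

Lemma hl_final (a b q P u c0 : R) : a <= 162 * u -> b <= a -> q <= P -> 0 <= a ->
  0 <= b -> 0 <= q -> 1 <= P -> 0 < u -> 0 < c0 -> b * q <= (c0 + 162) * P * u.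
Proof.
move=> ha hb hq a0 b0 q0 P1 u0 c0p.
have hbq : b * q <= a * P by apply: ler_pM.
have : a * P <= 162 * u * P by apply: ler_wpM2r => //; lra.
have : 0 <= c0 * (P * u) by rewrite !mulr_ge0 // ?ltW //; lra.
nra.
Qed.

End Arith.

Unset Implicit Arguments.
Set Strict Implicit.

Theorem proposition5p1 (R : realType) (E : set R[i]) (A : seq R[i]) :
  E `<=` @unit_disc R ->
  infinite_set E ->
  uniq A ->
  closure (E : set R[i]^o) `&` @unit_circle R = [set a | a \in A] ->
  (exists (S : seq (R[i] * R)) (K : set R[i]),
      [/\ compact (K : set R[i]^o), K `<=` @unit_disc R,
          (forall s, s \in S -> s.1 \in A /\ 1 < s.2) &
          E `<=` K `|` \bigcup_(s in [set s | s \in S]) stolz s.1 s.2]) ->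
  exists (sigma C : R) (N : nat),
    [/\ 0 < sigma, 0 < C &
        forall n : nat, (N <= n)%N -> Mn A E n <= C * (n%:R `^ (- sigma))].
Proof.
move=> hE hinf hU hcl [S [K [cK hK hS hcov]]].
have Acirc : forall a, a \in A -> cabs a = 1.
  move=> a aA; have : (closure (E : set R[i]^o) `&` @unit_circle R) a by rewrite hcl.
  by case.
have [r0 [r00 r01 hr0]] := compact_radius cK hK.
set c0 := 1 + \sum_(s <- S) `|s.2|.
have hc0 : forall s, s \in S -> s.2 <= c0.
  move=> s sS; rewrite /c0 (big_rem s sS) /=.
  have : 0 <= \sum_(t <- rem s S) `|t.2| by apply: sumr_ge0 => t _.
  have := ler_norm s.2; lra.
have c0pos : 0 < c0.
  rewrite /c0; have : 0 <= \sum_(t <- S) `|t.2| by apply: sumr_ge0 => t _.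
  lra.
have P1 := Pq_ge1 A.
set P := Pq A in P1.
exists 4^-1, ((c0 + 162) * P), (Num.truncn (((1 - r0) ^+ 4)^-1) + 1)%N.
split.
- by rewrite invr_gt0.
- by apply: mulr_gt0; lra.
move=> n hn.
have [u0 un u1] := u_props r00 r01 hn.
set u := (n%:R : R) `^ (- 4^-1) in u0 un u1 *.
have n0 : (0 < n)%N by move: hn; rewrite addn1; case: n {u u0 un u1}.
have hubV : has_ubound [set Vpts A Z | Z in tuples_in E n].
  exists (P ^+ n) => v [Z [hs hin] <-]; rewrite -hs; apply: Vpts_le.
  by move=> w /hin /hE.
have Vpos : 0 < Vn A E n.
  have [B hB hsz] := infinite_set_fset n hinf.
  set Z0 := take n (finmap.enum_fset B).
  have tZ0 : tuples_in E n Z0.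
    split; first by rewrite size_takel.
    by move=> w /mem_take wB; apply: hB.
  have : 0 < Vpts A Z0.
    rewrite Vpts_rec; apply: Vrec_pos => //=.
      by move=> w /tZ0.2 /hE.
    by apply: take_uniq; exact: finmap.fset_uniq.
  move=> h; apply: lt_le_trans h _; apply: ub_le_sup => //; by exists Z0.
rewrite /Mn.
case: (pselect (exists Z, tuples_in E n Z /\ Vpts A Z = Vn A E n)) => [[Z [hZ hZV]]|hno]; last first.
  rewrite (_ : [set Mpts A E Z | Z in _] = set0) ?inf0.
    by rewrite mulr_ge0 // ?ltW // mulr_gt0 // ?(lt_le_trans ltr01 P1) // addr_gt0.
  apply/seteqP; split => // v [Z hZ _]; exfalso; apply: hno; exists Z; exact: hZ.
apply: le_trans (_ : _ <= Mpts A E Z) _.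
  apply: ge_inf; first by exists 0 => v [Z' _ <-]; exact: Mpts_ge0.
  by exists Z.
have [hsz hin] := hZ.
have hZd : forall w, w \in Z -> cabs w < 1 by move=> w /hin /hE.
have Zpos : (0 < size Z)%N by rewrite hsz.
rewrite /Mpts; apply: ge_sup.
  by exists (cabs (Bq A Z (nth 0 Z 0))), (nth 0 Z 0) => //; apply: hin; rewrite mem_nth.
suff [P0 [x [W [eZ hb]]]] : exists P0 x W, Z = P0 ++ x :: W /\
    cabs (Bq A (P0 ++ W) x) <= (c0 + 162) * P * u.
  move=> v [z Ez <-]; apply: le_trans hb.
  by move: hZ hZV; rewrite eZ => hZ' hZV'; exact: swap_bound hE hubV hZ' hZV' Vpos Ez.
have split_mem : forall x, x \in Z -> exists P0 W, Z = P0 ++ x :: W.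
  by move=> x; case/splitPr => P0 W; exists P0, W.
have sub_d : forall P0 x W, Z = P0 ++ x :: W -> forall w, w \in P0 ++ W -> cabs w < 1.
  move=> P0 x W eZ w; rewrite mem_cat => /orP[wP|wW]; apply: hZd; rewrite eZ mem_cat.
    by rewrite wP.
  by rewrite in_cons wW !orbT.
case: (pselect (exists2 x, x \in Z & 1 - u < cabs x)) => [[x xZ hx]|hall].
  have Ex := hin x xZ.
  case: (hcov x Ex) => [Kx|[s sS hs]].
    by have := hl_contra (hr0 x Kx) hx u1.
  have [sA s2] := hS s sS.
  case: hs => hx1 hs.
  have [P0 [W eZ]] := split_mem x xZ.
  exists P0, x, W; split => //.
  apply: le_trans (Bq_le _ hx1 (sub_d _ _ _ eZ)) _.
  apply: le_trans (qpoly_le_a sA hx1) _.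
  have hc := hc0 s sS.
  have hd0 := cabs_ge0 (x - s.1).
  have hcu : cabs (x - s.1) <= c0 * u.
    by apply: le_trans hs _; apply: hl_stolz.
  by rewrite -/P; apply: hl_case1.
have hall' : forall x, x \in Z -> cabs x <= 1 - u.
  by move=> x xZ; rewrite leNgt; apply/negP => h; apply: hall; exists x.
have h0 : 0 < u / 4 by apply: divr_gt0 u0 (ltr0Sn _ 3).
have [x xZ hcnt] := @pigeon _ (cell (u / 4)) (Num.truncn (2 / (u / 4)) + 1) Z
  (fun y yZ => cell_lt h0 (hZd y yZ)) Zpos.
have [P0 [W eZ]] := split_mem x xZ.
exists P0, x, W; split => //.
have hx := hZd x xZ.
set p := fun y => cell (u / 4) y == cell (u / 4) x.
set t := count p (P0 ++ W).
have ct : count p Z = t.+1.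
  by rewrite eZ /t !count_cat /= /p eqxx add1n addnS.
rewrite ct hsz in hcnt.
have hb : cabs (blaschke (P0 ++ W) x) <= (2^-1) ^+ t.
  apply: blaschke_le => //; first exact: sub_d eZ.
  move=> w wPW pw.
  have wZ : w \in Z.
    rewrite eZ; move: wPW; rewrite !mem_cat in_cons => /orP[->//|->].
    by rewrite !orbT.
  apply: (cell_bf u0 hx (hall' w wZ)).
  by rewrite /p in pw; rewrite (eqP pw).
have ha : (2^-1 : R) ^+ t <= 162 * u.
  apply: (@case2_arith _ u n%:R (Num.truncn (2 / (u / 4)) + 1)%:R (t.+1)%:R).
  - exact: u0.
  - exact: hl_ule1 u1 r00.
  - exact: un.
  - by rewrite ltr0n.
  - by rewrite -natrX -natrM ler_nat; exact: hcnt.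
  - exact: ler0n.
  - have ht : (Num.truncn (2 / (u / 4)))%:R <= 2 / (u / 4).
      by rewrite truncn_le divr_ge0 // ltW.
    rewrite natrD.
    have e := hl_e8 u0.
    have h8 := ler_wpM2r (ltW u0) ht; rewrite e in h8.
    apply: hl_L h8 (hl_ule1 u1 r00).
  - by rewrite exprn_ge0 // invr_ge0.
  - exact: half_pow.
rewrite /Bq cabsM.
have hq := qpoly_le A hx; rewrite -/P in hq.
have := cabs_ge0 (Defs.qpoly A x); have := cabs_ge0 (blaschke (P0 ++ W) x).
have : 0 <= (2^-1 : R) ^+ t by rewrite exprn_ge0 // invr_ge0.
move: ha hb hq; set a := (2^-1 : R) ^+ t; set b := cabs (blaschke _ _); set q := cabs _.
move=> ha hb hq a0 b0 q0.
exact: hl_final ha hb hq a0 b0 q0 P1 u0 c0pos.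
Qed.
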